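(* Let $n>2k-t$, $q\geq 3$ and $k>2t+1$. Then \[\theta_{k}-\theta_{k-t}+\left[{n-t\atop k-t}\right]_q-q^{(k-t+1)(k-t)}\left[{n-k-1\atop k-t}\right]_q>\left[{n-t-2\atop k-t-2}\right]_q\left(1+\theta_{t+1}q^{k-t-1}\frac{q^{n-k}-1}{q^{k-t-1}-1}\right).\]
   Context: $\left[{n\atop k}\right]_q=\frac{(q^n-1)\cdots(q^{n-k+1}-1)}{(q^k-1)\cdots(q-1)}$ for $k>0$, $=1$ for $k=0$; $\theta_m=\frac{q^{m+1}-1}{q-1}$; $q$ is a prime power. (In the paper these are the sizes of the two affine constructions: the left side is the size of a maximal $t$-intersecting family of affine $k$-spaces built from an affine $t$-space $\delta$ and an affine $k$-space $\pi$ meeting it in a $(t-1)$-space; the right side is that of the family of affine $k$-spaces meeting a fixed affine $(t+2)$-space in a prescribed set of $(t+1)$-spaces.) *)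

(* Defs.v *)
From mathcomp Require Import all_boot all_order all_algebra.
Set Implicit Arguments. Unset Strict Implicit. Unset Printing Implicit Defensive.
Import Order.TTheory GRing.Theory Num.Theory.
Local Open Scope ring_scope.

Definition prime_power (q : nat) : Prop :=
  exists p e : nat, prime p /\ (0 < e)%N /\ q = (p ^ e)%N.

Definition gauss_binom (q n k : nat) : rat :=
  \prod_(i < k) (((q%:R : rat) ^+ (n - i) - 1) / ((q%:R : rat) ^+ i.+1 - 1)).

Definition theta (q m : nat) : rat :=
  ((q%:R : rat) ^+ m.+1 - 1) / ((q%:R : rat) - 1).

(* Main.v *)
Require Import Defs.
From mathcomp Require Import all_boot all_order all_algebra.
From mathcomp Require Import ring lra zify.
Import Order.TTheory GRing.Theory Num.Theory.
Local Open Scope ring_scope.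

Lemma X1 (x : rat) (a : nat) : 1 < x -> (0 < a)%N -> 1 < x ^+ a.
Proof.
move=> hx ha. have h : x ^+ 1 <= x ^+ a by rewrite (ler_eXn2l hx).
rewrite expr1 in h. by apply: lt_le_trans h.
Qed.

Lemma X1w (a : nat) (x : rat) : 1 < x -> 1 <= x ^+ a.
Proof. by move=> hx; apply: exprn_ege1; apply: ltW. Qed.

Lemma fbound (x : rat) (N M : nat) : 3 <= x -> (2 * M + 5 <= N)%N ->
  \prod_(i < M.+2) ((x ^+ (N - i) - 1) / (x ^+ i.+1 - 1))
  - x ^+ ((M + 3) * (M + 2)) *
    \prod_(i < M.+2) ((x ^+ (N - M - 3 - i) - 1) / (x ^+ i.+1 - 1))
  >= (x ^+ (M + 3) - 1) / (x ^+ (M + 2) - 1) *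
     \prod_(i < M.+1) ((x ^+ (N - i) - 1) / (x ^+ i.+1 - 1)).
Proof.
move=> hx3 hN. have hx : 1 < x by lra.
have E : x ^+ ((M + 3) * (M + 2)) = \prod_(i < M.+2) x ^+ (M + 3).
  rewrite prodr_const card_ord -exprM; congr (_ ^+ _); lia.
have term : forall i : nat, (i <= M.+1)%N ->
  0 <= x ^+ (M + 3) * ((x ^+ (N - M - 3 - i) - 1) / (x ^+ i.+1 - 1))
    <= (x ^+ (N - i) - 1) / (x ^+ i.+1 - 1).
  move=> i hi.
  have hd : 0 < (x ^+ i.+1 - 1)^-1.
    by rewrite invr_gt0 subr_gt0; apply: X1.
  have he : x ^+ (N - i) = x ^+ (M + 3) * x ^+ (N - M - 3 - i).
    by rewrite -exprD; congr (_ ^+ _); lia.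
  have h1 := @X1w (M + 3)%N x hx. have h2 := @X1w (N - M - 3 - i)%N x hx.
  apply/andP; split.
    apply: mulr_ge0; first lra. apply: mulr_ge0; lra.
  rewrite mulrA; apply: ler_wpM2r; first lra.
  rewrite he; nra.
rewrite E -big_split /=.
pose U := fun i : nat => (x ^+ (N - i) - 1) / (x ^+ i.+1 - 1).
pose V := fun i : nat => x ^+ (M + 3) * ((x ^+ (N - M - 3 - i) - 1) / (x ^+ i.+1 - 1)).
have eU : \prod_(i < M.+2) ((x ^+ (N - i) - 1) / (x ^+ i.+1 - 1))
   = (\prod_(i < M.+1) U i) * U M.+1 by rewrite big_ord_recr.
have eV : \prod_(i < M.+2) (x ^+ (M + 3) * ((x ^+ (N - M - 3 - i) - 1) / (x ^+ i.+1 - 1)))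
   = (\prod_(i < M.+1) V i) * V M.+1 by rewrite big_ord_recr.
rewrite eU eV.
have -> : \prod_(i < M.+1) ((x ^+ (N - i) - 1) / (x ^+ i.+1 - 1)) = \prod_(i < M.+1) U i by [].
set P := \prod_(i < M.+1) U i.
set Q := \prod_(i < M.+1) V i.
have hQP : Q <= P.
  apply: ler_prod => i _; apply: term. by have := ltn_ord i; lia.
have hP : 0 <= P.
  apply: prodr_ge0 => i _. have /andP[a b] := term i (ltnW (ltn_ord i)). exact: le_trans a b.
have /andP[hv _] := term M.+1 (leqnn _).
have hd : x ^+ M.+2 - 1 != 0.
  have := @X1 x 2 hx isT; rewrite expr2 -expr2. move=> _. have := @X1 x M.+2 hx isT. lra.
have he : x ^+ (N - M.+1) = x ^+ (M + 3) * x ^+ (N - M - 3 - M.+1).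
  by rewrite -exprD; congr (_ ^+ _); lia.
have huv : U M.+1 - V M.+1 = (x ^+ (M + 3) - 1) / (x ^+ (M + 2) - 1).
  rewrite /U /V he addn2. by field.
rewrite -huv. rewrite -/(V M.+1) in hv. nra.
Qed.

Lemma key (x y z th : rat) : 3 <= x -> 1 <= y -> 27 <= z -> 0 <= th ->
  2 * th <= y * x ^+ 2 ->
  1 + th * (y * x) * ((z - 1) / (y * x - 1))
   < x * y ^+ 2 * ((x ^+ 2 * z - 1) / (y * x - 1)).
Proof.
move=> hx hy hz ht hth.
have hd : 0 < y * x - 1 by nra.
have -> : 1 + th * (y * x) * ((z - 1) / (y * x - 1))
   = (y * x - 1 + th * (y * x) * (z - 1)) / (y * x - 1).
  by field; lra.
rewrite [X in _ < X]mulrA ltr_pM2r ?invr_gt0 //.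
have h1 : th * (y * x) * (z - 1) <= (y * x ^+ 2) / 2 * (y * x) * (z - 1).
  apply: ler_wpM2r; first lra. apply: ler_wpM2r; first nra. lra.
have h2 : 1 <= y * y by nra.
rewrite !expr2 in h1 *.
have h3 : y * x <= x * (y * y) by nra.
have h4 : 243 <= x * x * z by nra.
set s := x * (y * y) in h3 *.
have hs : 3 <= s by nra.
have e : y * (x * x) / 2 * (y * x) * (z - 1) = s * (x * x * z - x * x) / 2.
  by rewrite /s; field.
rewrite e in h1.
have h5 : 0 <= s * (x * x) by nra.
nra.
Qed.

Lemma pbound (x : rat) (N M : nat) : 3 <= x -> (2 * M + 5 <= N)%N ->
  x ^+ (2 * M) * \prod_(i < M) ((x ^+ (N - 2 - i) - 1) / (x ^+ i.+1 - 1))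
  <= \prod_(i < M) ((x ^+ (N - i) - 1) / (x ^+ i.+1 - 1)).
Proof.
move=> hx3 hN. have hx : 1 < x by lra.
have -> : x ^+ (2 * M) = \prod_(i < M) x ^+ 2.
  by rewrite prodr_const card_ord -exprM.
rewrite -big_split /=. apply: ler_prod => i _.
have hi := ltn_ord i.
have hd : 0 < (x ^+ i.+1 - 1)^-1.
  by rewrite invr_gt0 subr_gt0; apply: X1.
have he : x ^+ (N - i) = x ^+ 2 * x ^+ (N - 2 - i).
  by rewrite -exprD; congr (_ ^+ _); lia.
have h1 := @X1 x (N - 2 - i)%N hx ltac:(lia).
have h2 : 1 <= x ^+ 2 by nra.
apply/andP; split.
  apply: mulr_ge0; first lra. apply: mulr_ge0; lra.
rewrite mulrA; apply: ler_wpM2r; first lra.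
rewrite he; nra.
Qed.

Lemma gpos (x : rat) (N M : nat) : 3 <= x -> (2 * M + 5 <= N)%N ->
  0 < \prod_(i < M) ((x ^+ (N - 2 - i) - 1) / (x ^+ i.+1 - 1)).
Proof.
move=> hx3 hN. have hx : 1 < x by lra.
apply: prodr_gt0 => i _. have hi := ltn_ord i.
have h1 := @X1 x (N - 2 - i)%N hx ltac:(lia).
have h2 := @X1 x i.+1 hx isT.
apply: divr_gt0; lra.
Qed.

Theorem mainTheorem18 (q n k t : nat) :
  prime_power q -> (3 <= q)%N -> (2 * k - t < n)%N -> (2 * t + 1 < k)%N ->
  theta q k - theta q (k - t) + gauss_binom q (n - t) (k - t)
    - (q%:R : rat) ^+ ((k - t + 1) * (k - t)) * gauss_binom q (n - k - 1) (k - t)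
  > gauss_binom q (n - t - 2) (k - t - 2)
    * (1 + theta q (t + 1) * (q%:R : rat) ^+ (k - t - 1)
         * (((q%:R : rat) ^+ (n - k) - 1) / ((q%:R : rat) ^+ (k - t - 1) - 1))).
Proof.
move=> _ hq hn hk.
have hx3 : 3 <= (q%:R : rat) by rewrite (ler_nat rat 3 q).
have hx : 1 < (q%:R : rat) by lra.
rewrite /theta /gauss_binom.
set x := (q%:R : rat) in hx3 hx *.
have e1 : (k - t = (k - t - 2).+2)%N by lia.
set M := (k - t - 2)%N in e1 *.
have hN : (2 * M + 5 <= n - t)%N by rewrite /M; lia.
have htM : (t <= M)%N by rewrite /M; lia.
have e2 : (n - k - 1 = n - t - M - 3)%N by rewrite /M; lia.
have e3 : (n - k = n - t - M - 2)%N by rewrite /M; lia.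
have e4 : (k - t - 1 = M.+1)%N by rewrite /M; lia.
have e5 : ((k - t + 1) * (k - t) = (M + 3) * (M + 2))%N.
  by rewrite e1 -addn2 -addn3 -addnA.
rewrite e2 e3 e4 e5 e1.
set N := (n - t)%N in hN *.
have F := @fbound x N M hx3 hN.
have Pb := @pbound x N M hx3 hN.
have G := @gpos x N M hx3 hN.
set G0 := \prod_(i < M) _ in Pb G.
rewrite big_ord_recr /= in F.
set P0 := \prod_(i < M) _ in Pb F.
set c := (x ^+ (M + 3) - 1) / (x ^+ (M + 2) - 1) in F.
have hc : x <= c.
  have hd : 0 < x ^+ (M + 2) - 1 by have := @X1 x (M + 2)%N hx ltac:(lia); lra.
  rewrite /c ler_pdivlMr // addn3 exprS addn2. nra.
have hy : 1 <= x ^+ M by apply: X1w; lra.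
have hz : 27 <= x ^+ (N - M - 2).
  have -> : (N - M - 2 = 3 + (N - M - 5))%N by lia.
  rewrite exprD. have h5 := @X1w (N - M - 5)%N x hx.
  have -> : x ^+ 3 = x * x * x by rewrite !exprS expr0 mulr1 mulrA.
  have h6 : 27 <= x * x * x by nra.
  nra.
have hth0 : 0 <= (x ^+ (t + 1).+1 - 1) / (x - 1).
  apply: divr_ge0; last lra. have := @X1w (t + 1).+1 x hx; lra.
have hth : 2 * ((x ^+ (t + 1).+1 - 1) / (x - 1)) <= x ^+ M * x ^+ 2.
  have h1 : x ^+ (t + 1).+1 <= x ^+ M * x ^+ 2.
    by rewrite -exprD (ler_eXn2l hx); lia.
  set th := _ / _ in hth0 *.
  have : th * (x - 1) = x ^+ (t + 1).+1 - 1 by rewrite /th; field; lra.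
  nra.
have K := @key x _ _ _ hx3 hy hz hth0 hth.
have eA : x ^+ M.+1 = x ^+ M * x by rewrite exprSr.
have eB : x ^+ (N - M) = x ^+ 2 * x ^+ (N - M - 2).
  by rewrite -exprD; congr (_ ^+ _); lia.
have eC : x ^+ (2 * M) = x ^+ M ^+ 2 by rewrite -exprM mulnC.
have hk1 : (x ^+ k.+1 - 1) / (x - 1) >= (x ^+ M.+3 - 1) / (x - 1).
  apply: ler_wpM2r; first by rewrite invr_ge0; lra.
  rewrite lerB // (ler_eXn2l hx). rewrite /M; lia.
rewrite -/G0 eA. rewrite eA eB in F. rewrite eC in Pb.
set y := x ^+ M in K F Pb hy hth *.
set z := x ^+ (N - M - 2) in K F hz *.
set th := (x ^+ (t + 1).+1 - 1) / (x - 1) in K hth0 *.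
set u := (x ^+ 2 * z - 1) / (y * x - 1) in K F.
have hu : 0 < u.
  rewrite /u; apply: divr_gt0.
    have : 1 <= x ^+ 2 by apply: X1w; lra. nra.
  nra.
have hy2 : 0 <= y ^+ 2 by rewrite expr2; nra.
have hG2 : 0 <= y ^+ 2 * G0 by apply: mulr_ge0 => //; lra.
have hP0 : 0 <= P0 by lra.
have h1 : x * (P0 * u) <= c * (P0 * u).
  apply: ler_wpM2r => //. apply: mulr_ge0 => //; lra.
have h2 : x * (y ^+ 2 * G0 * u) <= x * (P0 * u).
  apply: ler_wpM2l; first lra. apply: ler_wpM2r => //; lra.
have h3 : G0 * (1 + th * (y * x) * ((z - 1) / (y * x - 1)))
    < G0 * (x * y ^+ 2 * u) by rewrite ltr_pM2l.
have e6 : G0 * (x * y ^+ 2 * u) = x * (y ^+ 2 * G0 * u) by ring.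
lra.
Qed.
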